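(* Let $G$ be a finite nested group with chain of centers $G=X_0>X_1>\dots>X_n\ge1$. If $N$ is a normal subgroup of $G$, then for each $i=1,\dots,n$ either $[X_{i-1},G]\le N$ or $N\le X_i$.
   Context: For $\chi\in\mathrm{Irr}(G)$, $Z(\chi)=\{g\in G: |\chi(g)|=\chi(1)\}$. $G$ is nested if for all $\chi,\psi\in\mathrm{Irr}(G)$ either $Z(\chi)\le Z(\psi)$ or $Z(\psi)\le Z(\chi)$; then the distinct subgroups $Z(\chi)$, $\chi\in\mathrm{Irr}(G)$, form a chain $G=X_0>X_1>\dots>X_n\ge1$, the chain of centers. *)

(* Defs.v *)
From HB Require Import structures.
From mathcomp Require Import all_boot all_order all_algebra all_fingroup all_solvable all_field all_character.
Set Implicit Arguments. Unset Strict Implicit. Unset Printing Implicit Defensive.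
Import Order.TTheory GRing.Theory Num.Theory.

Local Open Scope ring_scope.

Definition Zchi (gT : finGroupType) (G : {group gT}) (chi : 'CF(G)) : {set gT} :=
  [set g in G | `|chi g| == chi 1%g].

Definition nested (gT : finGroupType) (G : {group gT}) : Prop :=
  forall i j : Iirr G,
    (Zchi 'chi_i \subset Zchi 'chi_j) \/ (Zchi 'chi_j \subset Zchi 'chi_i).

Definition chain_of_centers (gT : finGroupType) (G : {group gT})
    (n : nat) (X : nat -> {set gT}) : Prop :=
  [/\ forall k, (k < n)%N -> X k.+1 \proper X k,
      forall i : Iirr G, exists2 k, (k <= n)%N & Zchi 'chi_i = X k
    & forall k, (k <= n)%N -> exists i : Iirr G, X k = Zchi 'chi_i].

(* Main.v *)
Require Import Defs.
From HB Require Import structures.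
From mathcomp Require Import all_boot all_order all_algebra all_fingroup all_solvable all_field all_character.
Set Implicit Arguments. Unset Strict Implicit. Unset Printing Implicit Defensive.
Local Open Scope group_scope.
Local Open Scope ring_scope.

Lemma Zchi_cfcenter (gT : finGroupType) (G : {group gT}) (j : Iirr G) :
  Zchi 'chi_j = ('Z('chi_j))%CF.
Proof.
apply/setP=> x; rewrite /Zchi inE.
case Gx: (x \in G); last first.
  by apply/esym/negbTE; apply/negP=> /(subsetP (cfcenter_sub _)); rewrite Gx.
by rewrite irr_cfcenterE.
Qed.

Lemma comm_center_ker (gT : finGroupType) (G : {group gT}) (j : Iirr G) :
  [~: ('Z('chi_j))%CF, G] \subset cfker 'chi_j.
Proof.
have nKG := normal_norm (cfker_normal 'chi_j).
rewrite -quotient_cents2 //; last exact: subset_trans (cfcenter_sub _) nKG.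
apply: subset_trans (cfcenter_subset_center 'chi_j) _.
exact: subsetIr.
Qed.

Lemma chain_mono (gT : finGroupType) (n : nat) (X : nat -> {set gT}) :
  (forall k, (k < n)%N -> X k.+1 \proper X k) ->
  forall a b, (a <= b <= n)%N -> X b \subset X a.
Proof.
move=> Hp a; elim=> [|b IH] /andP[ab bn].
  by rewrite leqn0 in ab; rewrite (eqP ab).
rewrite leq_eqVlt in ab; case/orP: ab => [/eqP->//|ab].
apply: subset_trans (proper_sub (Hp b bn)) (IH _).
by rewrite -ltnS ab ltnW.
Qed.

Theorem lemma4p1 (gT : finGroupType) (G N : {group gT}) (n : nat)
    (X : nat -> {set gT}) :
  nested G -> chain_of_centers G n X -> (N <| G)%g ->
  forall i : nat, (1 <= i <= n)%N ->
    ([~: X i.-1, G]%g \subset N) \/ (N \subset X i).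
Proof.
move=> _ [Hp Hc _] nsNG i /andP[i1 iN].
have [sNX|nsNX] := boolP (N \subset X i); first by right.
left; rewrite -(cap_cfker_normal nsNG); apply/bigcapsP=> j sNK.
have [k kn Ek] := Hc j.
have hZK : Zchi 'chi_j = X k := Ek.
have [ik|ki] := leqP i k.
  case/negP: nsNX.
  have h1 : X k \subset X i by apply: (chain_mono Hp); rewrite ik kn.
  have h2 : cfker 'chi_j \subset X k.
    by rewrite -hZK Zchi_cfcenter; exact: normal_sub (cfker_center_normal _).
  exact: subset_trans sNK (subset_trans h2 h1).
have h3 : X i.-1 \subset X k.
  apply: (chain_mono Hp); rewrite -ltnS prednK // ki /=.
  exact: leq_trans (leq_pred i) iN.
have h4 : X i.-1 \subset ('Z('chi_j))%CF by rewrite -Zchi_cfcenter hZK.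
exact: subset_trans (commgSS h4 (subxx _)) (comm_center_ker j).
Qed.
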